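(* For positive integers $s$ and $D\ge0$, the polynomial $p_{s,D}(z):=\mathbb{E}_{Y_1,\dots,Y_s}\big[T_{D_s}(z)\,\mathbf{1}\{|D_s|\le D\}\big]$ has degree at most $D$ and all its coefficients have absolute value at most $2^{2D}$.
   Context: $Y_1,\dots,Y_s$ are i.i.d. uniform $\pm1$ random variables and $D_s:=\sum_{i=1}^sY_i$. $T_k$ is the Chebyshev polynomial of the first kind ($T_0=1$, $T_1=z$, $T_{k+1}=2zT_k-T_{k-1}$), extended to negative indices by $T_{-k}=T_k$. *)

(* Defs.v *)
From HB Require Import structures.
From mathcomp Require Import all_boot all_order all_algebra.
Set Implicit Arguments. Unset Strict Implicit. Unset Printing Implicit Defensive.
Import Order.TTheory GRing.Theory Num.Theory.
Local Open Scope ring_scope.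

Fixpoint cheb (R : nzRingType) (n : nat) : {poly R} :=
  match n with
  | 0 => 1
  | 1 => 'X
  | (m.+1 as k).+1 => 2%:R *: 'X * cheb R k - cheb R m
  end.

Definition chebZ (R : nzRingType) (k : int) : {poly R} := cheb R `|k|%N.

Definition Dsum (s : nat) (y : {ffun 'I_s -> bool}) : int :=
  \sum_(i < s) (if y i then 1 else -1).

(* p_{s,D}(z) = E[ T_{D_s}(z) 1{|D_s| <= D} ] with Y_i i.i.d. uniform +-1:
   average over all 2^s sign vectors. *)
Definition pSD (R : fieldType) (s D : nat) : {poly R} :=
  (2%:R ^+ s)^-1 *:
    \sum_(y : {ffun 'I_s -> bool})
      (if (`|Dsum y|%N <= D)%N then chebZ R (Dsum y) else 0).

(* Main.v *)
Require Import Defs.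
From mathcomp Require Import all_boot all_order all_algebra zify lra.
Import Order.TTheory GRing.Theory Num.Theory.
Local Open Scope ring_scope.

Lemma cheb_prop2 (R : realFieldType) (k : nat) :
  ((size (cheb R k) <= k.+1)%N /\ forall i, `|(cheb R k)`_i| <= 2%:R ^+ (2*k)) /\
  ((size (cheb R k.+1) <= k.+2)%N /\ forall i, `|(cheb R k.+1)`_i| <= 2%:R ^+ (2*k.+1)).
Proof.
elim: k => [|k [[Hs0 Hc0] [IHs1 IHc1]]].
  split; split.
  - by rewrite /= size_poly1.
  - move=> i; rewrite /= coefC; case: (i == 0)%N; rewrite ?normr1 ?normr0 //.
  - by rewrite /= size_polyX.
  - move=> i; rewrite /= coefX; case: (i == 1)%N; rewrite ?normr1 ?normr0 //.
    by rewrite exprn_ege1 // ler1n.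
    by rewrite exprn_ge0 // ler0n.
split; first by split.
have E : cheb R k.+2 = 2%:R *: ('X * cheb R k.+1) - cheb R k by rewrite /= scalerAl.
rewrite E; split.
  apply: leq_trans (size_polyD _ _) _; rewrite size_polyN geq_max; apply/andP; split.
    apply: leq_trans (size_scale_leq _ _) _.
    apply: leq_trans (size_polyMleq _ _) _.
    by rewrite size_polyX; lia.
  by apply: (leq_trans Hs0); lia.
move=> i; rewrite coefB coefZ coefXM.
have H4 : (2%:R : R) ^+ (2 * k.+2) = 2%:R ^+ (2 * k.+1) * 4%:R.
  have -> : (2 * k.+2 = 2 * k.+1 + 2)%N by lia.
  by rewrite exprD expr2 -natrM.
have H4b : (2%:R : R) ^+ (2 * k.+1) = 2%:R ^+ (2 * k) * 4%:R.
  have -> : (2 * k.+1 = 2 * k + 2)%N by lia.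
  by rewrite exprD expr2 -natrM.
have P0 : (0:R) <= 2%:R ^+ (2 * k) by rewrite exprn_ge0 // ler0n.
apply: le_trans (ler_normB _ _) _.
rewrite H4; have := Hc0 i; have := IHc1 i.-1.
case: (i == 0)%N; rewrite ?mulr0 ?normr0 ?add0r.
  move=> _ h; rewrite H4b; lra.
move=> h1 h2; rewrite normrM normr_nat.
rewrite H4b.
have P1 : (0:R) <= `|(cheb R k.+1)`_i.-1| by [].
nra.
Qed.

Lemma cheb_size (R : realFieldType) k : (size (cheb R k) <= k.+1)%N.
Proof. by case: (cheb_prop2 R k) => [[]]. Qed.

Lemma cheb_coef (R : realFieldType) k i : `|(cheb R k)`_i| <= 2%:R ^+ (2*k).
Proof. by case: (cheb_prop2 R k) => [[_ ->]]. Qed.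

Theorem corollary1 (R : realFieldType) (s D : nat) (hs : (0 < s)%N) :
  (size (pSD R s D) <= D.+1)%N /\
  (forall i : nat, `|(pSD R s D)`_i| <= 2%:R ^+ (2 * D)).
Proof.
rewrite /pSD; split.
  apply: leq_trans (size_scale_leq _ _) _.
  apply: (big_ind (fun p : {poly R} => (size p <= D.+1)%N)).
  - by rewrite size_poly0.
  - move=> p q hp hq; apply: leq_trans (size_polyD _ _) _; by rewrite geq_max hp hq.
  - move=> y _; case: ifP => h; last by rewrite size_poly0.
    by apply: leq_trans (cheb_size _ _) _.
move=> i; rewrite coefZ coef_sum normrM.
have Hn : (0:R) < 2%:R ^+ s by rewrite exprn_gt0 // ltr0n.
rewrite ger0_norm; last by rewrite invr_ge0 ltW.
rewrite ler_pdivrMl //.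
apply: le_trans (ler_norm_sum _ _ _) _.
apply: (@le_trans _ _ (\sum_(y : {ffun 'I_s -> bool}) (2%:R : R) ^+ (2 * D))).
  apply: ler_sum.
  move=> y _; case: ifP => h; last by rewrite coef0 normr0 exprn_ge0 // ler0n.
  apply: le_trans (cheb_coef _ _ _) _.
  by rewrite ler_eXn2l // ?ltr1n //; lia.
rewrite sumr_const card_ffun card_bool card_ord.
by rewrite -(mulr_natr ((2%:R : R) ^+ (2*D)) (2^s)) natrX mulrC.
Qed.
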